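(* Let $\gamma\ge1$, $u\in\mathbb N_{\ge1}$, and let $X_1,\dots,X_u$ be independent random variables with $X_m\sim\mathrm{Bernoulli}(1-1/m^\gamma)$ for $m=1,\dots,u$. Then for every $\eta\ge1$ with $\lceil\sum_{m=1}^u1/m^\gamma\rceil\le\eta\le u$, $$\mathbb P\Bigl(\sum_{m=1}^uX_m<u-\eta\Bigr)\le\frac{u^{1+\eta}}{\eta^{(\gamma+1)\eta}}\exp\bigl((\gamma+1)\eta\bigr).$$ *)

(* Defs.v *)
From HB Require Import structures.
From mathcomp Require Import all_boot all_order all_algebra.
From mathcomp Require Import all_classical all_reals all_analysis.
Set Implicit Arguments. Unset Strict Implicit. Unset Printing Implicit Defensive.
Import Order.TTheory GRing.Theory Num.Theory.
Local Open Scope classical_set_scope.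
Local Open Scope ring_scope.

Definition is_bernoulli (R : realType) (d : measure_display)
  (T : measurableType d) (P : probability T R) (X : T -> R) (p : R) : Prop :=
  P (X @^-1` [set 1]) = p%:E /\ P (X @^-1` [set 0]) = (1 - p)%:E.

(* Mutual independence of a finite family of real random variables:
   the product rule for the preimages of any family of measurable sets
   (taking B i = setT recovers every subfamily). *)
Definition mutually_independent (R : realType) (d : measure_display)
  (T : measurableType d) (P : probability T R) (n : nat)
  (X : 'I_n -> T -> R) : Prop :=
  forall B : 'I_n -> set R, (forall i, measurable (B i)) ->
    fine (P (\bigcap_(i in [set: 'I_n]) (X i @^-1` B i)))
    = \prod_(i < n) fine (P (X i @^-1` B i)).

(* Main.v *)
Require Import Defs.
From HB Require Import structures.
From mathcomp Require Import all_boot all_order all_algebra.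
From mathcomp Require Import all_classical all_reals all_analysis.
From mathcomp Require Import ring lra.
Import Order.TTheory GRing.Theory Num.Theory.
Local Open Scope classical_set_scope.
Local Open Scope ring_scope.

Lemma prod_uniq_fact (n : nat) (s : seq nat) : uniq s -> all (fun i => i < n)%N s ->
  ((size s)`! <= \prod_(i <- s) i.+1)%N.
Proof.
elim: n s => [|n IH] s us.
  by case: s us => [|x s] //= _; rewrite big_nil.
move=> als.
have [ns|ns] := boolP (n \in s).
  rewrite (perm_big _ (perm_to_rem ns)) big_cons (perm_size (perm_to_rem ns)) /=.
  set r := rem n s.
  have ur : uniq r by apply: rem_uniq.
  have alr : all (fun i => i < n)%N r.
    apply/allP => y; rewrite (mem_rem_uniq _ us) inE => /andP[yn ys].
    have := allP als y ys; rewrite ltnS leq_eqVlt (negPf yn) //.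
  have szr : (size r <= n)%N.
    rewrite -(size_iota 0 n); apply: uniq_leq_size => // y yr.
    by rewrite mem_iota add0n (allP alr y yr).
  case: (size r) szr (IH r ur alr) => [|m] hm hIH.
    by rewrite muln_gt0 /=; apply: prodn_gt0.
  rewrite factS; apply: leq_mul => //.
apply: IH => //; apply/allP => y ys.
have := allP als y ys; rewrite ltnS leq_eqVlt => /orP[/eqP yn|//].
by move: ns; rewrite -yn ys.
Qed.

Lemma fact_expR (R : realType) (k : nat) :
  (k%:R : R) ^+ k <= expR k%:R * k`!%:R.
Proof.
elim: k => [|k IH]; first by rewrite expr0 fact0 mulr1 expR0.
rewrite factS natrM exprS.
have h1 : (k.+1%:R : R) ^+ k <= expR 1 * k%:R ^+ k.
  case: k IH => [|k] IH; first by rewrite !expr0 mulr1 -expR0 ler_expR.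
  have kp : (0 : R) < k.+1%:R by rewrite ltr0n.
  have -> : (k.+2%:R : R) = k.+1%:R * (1 + k.+1%:R^-1).
    by rewrite mulrDr mulr1 mulfV ?gt_eqF // -natr1 addrC.
  rewrite exprMn mulrC ler_wpM2r ?exprn_ge0 ?ler0n //.
  have -> : expR (1 : R) = expR (k.+1%:R^-1) ^+ k.+1.
    by rewrite -expRM_natr mulVf ?gt_eqF.
  rewrite lerXn2r ?nnegrE ?expR_ge0 ?addr_ge0 ?invr_ge0 ?ler0n //.
  exact: expR_ge1Dx.
rewrite -natr1 expRD; rewrite -natr1 in h1.
have h2 : (k%:R + 1 : R) ^+ k <= expR 1 * (expR k%:R * k`!%:R).
  exact: (le_trans h1 (ler_wpM2l (expR_ge0 _) IH)).
have -> : expR k%:R * expR 1 * ((k%:R + 1) * k`!%:R) =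
  (k%:R + 1) * (expR 1 * (expR k%:R * k`!%:R)) :> R by ring.
by rewrite ler_wpM2l // addr_ge0 ?ler0n.
Qed.

Lemma final_bound (R : realType) (gamma eta : R) (u k : nat) :
  1 <= gamma -> 1 <= eta -> (1 <= u)%N -> eta < k%:R -> k%:R <= eta + 1 ->
  (u%:R ^+ k) / (k`!%:R * (k`!%:R `^ gamma)) <=
  u%:R `^ (1 + eta) / eta `^ ((gamma + 1) * eta) * expR ((gamma + 1) * eta).
Proof.
move=> g1 e1 u1 ek ke.
set K : R := k%:R. set U : R := u%:R. set F : R := k`!%:R.
have Kp : 0 < K by lra.
have Up : 0 < U by rewrite /U ltr0n.
have U1 : 1 <= U by rewrite /U ler1n.
have Fp : 0 < F by rewrite /F ltr0n fact_gt0.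
have ep : 0 < eta by lra.
have -> : U ^+ k = expR (K * ln U).
  by rewrite -powR_mulrn ?ltW // /powR gt_eqF.
have -> : F `^ gamma = expR (gamma * ln F) by rewrite /powR gt_eqF.
have -> : U `^ (1 + eta) = expR ((1 + eta) * ln U) by rewrite /powR gt_eqF.
have -> : eta `^ ((gamma + 1) * eta) = expR ((gamma + 1) * eta * ln eta)
  by rewrite /powR gt_eqF.
rewrite -{1}[F]lnK ?posrE // -expRD -expRN -expRD -expRN -expRD -expRD ler_expR.
have lU : 0 <= ln U by apply: ln_ge0.
have le : 0 <= ln eta by apply: ln_ge0.
have hF : K * ln K - K <= ln F.
  have := fact_expR R k; rewrite -/K -/F.
  rewrite -ler_ln ?posrE ?exprn_gt0 ?mulr_gt0 ?expR_gt0 //.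
  by rewrite lnXn // lnM ?posrE ?expR_gt0 // expRK -mulr_natl; lra.
have hK : K - eta <= K * (ln K - ln eta).
  have := @le_ln1Dx R (eta / K - 1).
  have -> : 1 + (eta / K - 1) = eta / K by ring.
  rewrite lnM ?posrE ?invr_gt0 // lnV ?posrE //.
  move=> /(_ _)/wrap[]. have : 0 < eta / K by rewrite divr_gt0. lra.
  move=> h.
  have := ler_wpM2l (ltW Kp) h.
  have -> : K * (eta / K - 1) = eta - K by field; rewrite gt_eqF.
  lra.
have h3 : (K - eta) * ln eta >= 0 by apply: mulr_ge0 => //; lra.
have h4 : (eta + 1 - K) * ln U >= 0 by apply: mulr_ge0 => //; lra.
have h5 : K * ln K - K >= eta * ln eta - eta by nra.
have h6 : (gamma + 1) * (ln F - (eta * ln eta - eta)) >= 0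
  by apply: mulr_ge0; lra.
nra.
Qed.

Lemma ffact_le_exp (m n : nat) : (n ^_ m <= n ^ m)%N.
Proof.
elim: m n => [|m IH] n; first by rewrite ffactn0 expn0.
rewrite ffactnS expnS leq_mul //; apply: leq_trans (IH _) _.
case: m {IH} => [|m]; first by rewrite !expn0.
by rewrite leq_exp2r // leq_pred.
Qed.

Lemma powR_prod (R : realType) (I : Type) (r : seq I) (P : pred I) (F : I -> R) (g : R) :
  (forall i, 0 <= F i) ->
  \prod_(i <- r | P i) (F i `^ g) = (\prod_(i <- r | P i) F i) `^ g.
Proof.
move=> F0.
suff [] : 0 <= \prod_(i <- r | P i) F i /\
  \prod_(i <- r | P i) (F i `^ g) = (\prod_(i <- r | P i) F i) `^ g by [].
apply: (big_rec2 (fun y1 y2 => 0 <= y2 /\ y1 = y2 `^ g)).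
  by rewrite powR1.
move=> i y1 y2 _ [y2p ->]; split; first exact: mulr_ge0.
by rewrite powRM.
Qed.

Lemma prod_set_fact (u : nat) (S : {set 'I_u}) :
  ((#|S|)`! <= \prod_(i in S) (val i).+1)%N.
Proof.
rewrite -big_enum -(big_map val xpredT (fun j => j.+1)).
have -> : #|S| = size (map val (enum S)) by rewrite size_map cardE.
apply: prod_uniq_fact (u) _ _ _.
  by rewrite map_inj_uniq ?enum_uniq //; apply: val_inj.
by apply/allP => j /mapP[i _ ->]; apply: ltn_ord.
Qed.

Lemma sum_bound (R : realType) (gamma : R) (u k : nat) : 0 <= gamma ->
  \sum_(S : {set 'I_u} | #|S| == k) \prod_(i in S) ((i.+1%:R `^ gamma)^-1)
  <= (u%:R ^+ k) / (k`!%:R * (k`!%:R `^ gamma)).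
Proof.
move=> g0.
set c : R := (k`!%:R `^ gamma)^-1.
have Fp : (0 : R) < k`!%:R by rewrite ltr0n fact_gt0.
have cp : 0 < c by rewrite invr_gt0 powR_gt0.
apply: (@le_trans _ _ (\sum_(S : {set 'I_u} | #|S| == k) c)).
  apply: ler_sum => S /eqP HS.
  rewrite prodfV powR_prod; last by move=> i; rewrite ler0n.
  rewrite lef_pV2 ?posrE ?powR_gt0 //; last first.
    by rewrite -natr_prod ltr0n prodn_gt0.
  rewrite -natr_prod; apply: ge0_ler_powR => //.
  - by rewrite nnegrE ler0n.
  - by rewrite nnegrE ler0n.
  by rewrite ler_nat -HS prod_set_fact.
rewrite sumr_const.
have -> : #|[pred S : {set 'I_u} | #|S| == k]| = 'C(u, k).
  by have := @card_draws ('I_u) k; rewrite card_ord => <-; apply: eq_card => S; rewrite !inE.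
have -> : (u%:R : R) ^+ k / (k`!%:R * k`!%:R `^ gamma) = (u%:R ^+ k / k`!%:R) * c.
  by rewrite /c invfM mulrA.
rewrite -[c *+ _]mulr_natl; apply: ler_wpM2r; first exact: ltW.
by rewrite ler_pdivlMr // -natrX -natrM ler_nat bin_ffact ffact_le_exp.
Qed.

Lemma union_bound d (T : measurableType d) (R : realType) (P : probability T R)
  (I : Type) (s : seq I) (G : I -> set T) :
  (forall i, measurable (G i)) ->
  measurable (\big[setU/set0]_(i <- s) G i) /\
  (P (\big[setU/set0]_(i <- s) G i) <= \sum_(i <- s) P (G i))%E.
Proof.
move=> mG; elim: s => [|i s [ms IH]]; first by rewrite !big_nil measure0.
rewrite !big_cons; split; first exact: measurableU.
apply: le_trans (measureU2 _ _ _) _ => //; exact: leeD.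
Qed.

Lemma in_bigsetU (T : Type) (I : eqType) (s : seq I) (G : I -> set T) (i : I) (x : T) :
  i \in s -> G i x -> (\big[setU/set0]_(j <- s) G j) x.
Proof.
elim: s => [//|j s IH]; rewrite inE big_cons => /orP[/eqP <-|js] Gx; first by left.
by right; apply: IH.
Qed.
Theorem lemmaC2 (R : realType) (d : measure_display) (T : measurableType d)
  (P : probability T R) (gamma eta : R) (u : nat) (X : 'I_u -> T -> R) :
  1 <= gamma -> (1 <= u)%N ->
  (forall i, measurable_fun setT (X i)) ->
  (forall i : 'I_u, is_bernoulli P (X i) (1 - (((i.+1)%:R `^ gamma)^-1))) ->
  mutually_independent P X ->
  1 <= eta ->
  (Num.ceil (\sum_(i < u) ((i.+1)%:R `^ gamma)^-1))%:~R <= eta ->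
  eta <= u%:R ->
  (P [set t | (\sum_(i < u) X i t < u%:R - eta)%R]
    <= (u%:R `^ (1 + eta) / eta `^ ((gamma + 1) * eta)
        * expR ((gamma + 1) * eta))%:E)%E.
Proof.
move=> g1 u1 mX bern indep e1 hceil eu.
set k := (Num.truncn eta).+1.
have e0 : 0 <= eta by lra.
have /andP[tle tlt] := truncn_itv e0.
have ek : eta < k%:R := tlt.
have ke : k%:R <= eta + 1 by rewrite /k -natr1 lerD2r.
pose p (i : 'I_u) : R := (i.+1%:R `^ gamma)^-1.
have mpre : forall i B, measurable B -> measurable (X i @^-1` B).
  by move=> i B mB; rewrite -[X i @^-1` B]setTI; exact: mX.
pose Ni i := ~` (X i @^-1` [set 0] `|` X i @^-1` [set 1]).
have mNi i : measurable (Ni i).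
  by apply: measurableC; apply: measurableU; apply: mpre; exact: measurable_set1.
have PNi i : P (Ni i) = 0%E.
  rewrite probability_setC; last first.
    by apply: measurableU; apply: mpre; exact: measurable_set1.
  rewrite measureU; first last.
  - apply/seteqP; split => [t [/= h0 h1]|//].
    by move: h1; rewrite h0 => /esym/eqP; rewrite oner_eq0.
  - by apply: mpre; exact: measurable_set1.
  - by apply: mpre; exact: measurable_set1.
  have [b1 b0] := bern i.
  have hs : (P (X i @^-1` [set 0%R]) + P (X i @^-1` [set 1%R]))%E = 1%E.
    by rewrite b0 b1 -EFinD; congr EFin; lra.
  rewrite [X in (1 - X)%E](_ : _ = 1%E); last exact: hs.
  by rewrite -EFinB subrr.
pose N := \big[setU/set0]_(i <- enum 'I_u) Ni i.
have [mN PN] := @union_bound _ _ _ P _ (enum 'I_u) _ mNi.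
have PN0 : P N = 0%E.
  apply/eqP; rewrite -measure_le0; apply: le_trans PN _.
  by rewrite big1 // => i _; rewrite PNi.
pose B (S : {set 'I_u}) (i : 'I_u) : set R := if i \in S then [set 0%R] else setT.
have mB S i : measurable (B S i).
  by rewrite /B; case: ifP => _; [exact: measurable_set1|exact: measurableT].
pose F (S : {set 'I_u}) := \bigcap_(i in [set: 'I_u]) (X i @^-1` B S i).
have mF S : measurable (F S).
  by apply: fin_bigcap_measurable; [exact: finite_finset|move=> i _; exact: mpre].
have PF S : P (F S) = (\prod_(i in S) p i)%:E.
  rewrite -(fineK (fin_num_measure P _ (mF S))) (indep _ (mB S)).
  congr (_%:E); rewrite [RHS]big_mkcond /=; apply: eq_bigr => i _.
  rewrite /B; case: ifP => iS.
    by have [_ ->] := bern i; rewrite /p /=; lra.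
  by rewrite preimage_setT probability_setT.
pose A := [set S : {set 'I_u} | #|S| == k]%SET.
pose U := \big[setU/set0]_(S <- enum A) F S.
have [mU PU] := @union_bound _ _ _ P _ (enum A) _ mF.
pose E := [set t | (\sum_(i < u) X i t < u%:R - eta)%R].
have mE : measurable E.
  have mf : measurable_fun setT (fun t => \sum_(i < u) X i t).
    by apply: measurable_sum.
  have := mf measurableT _ (measurable_itv `]-oo, (u%:R - eta)[).
  rewrite setTI; congr measurable; apply/seteqP; split => t /=;
  by rewrite in_itv /=.
have cover : E `<=` N `|` U.
  move=> t Et; have [tN|tN] := pselect (N t); [by left|right].
  have X01 i : X i t = 0 \/ X i t = 1.
    case: (pselect (X i t = 0)) => [h|h]; first by left.
    case: (pselect (X i t = 1)) => [h'|h']; first by right.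
    exfalso; apply: tN; apply: (@in_bigsetU _ _ _ _ i); first by rewrite mem_enum.
    by case.
  set Z := [set i | X i t == 0]%SET.
  have sumE : \sum_(i < u) X i t = u%:R - #|Z|%:R.
    have -> : \sum_(i < u) X i t = \sum_(i < u) (1 - (X i t == 0)%:R).
      apply: eq_bigr => i _; case: (X01 i) => ->; first by rewrite eqxx subrr.
      by rewrite oner_eq0 subr0.
    rewrite sumrB sumr_const card_ord; congr (_ - _).
    rewrite -sum1_card natr_sum [RHS]big_mkcond /=; apply: eq_bigr => i _.
    have -> : (i \in Z) = (X i t == 0) by rewrite /Z inE.
    by case: (X i t == 0).
  have hZ : eta < #|Z|%:R by move: Et; rewrite /E /= sumE; lra.
  have kZ : (k <= #|Z|)%N by rewrite /k (truncn_lt_nat _ e0).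
  have /card_geqP [s [us ss sZ]] := kZ.
  apply: (@in_bigsetU _ _ _ _ [set i in s]%SET).
    by rewrite mem_enum inE cardsE (card_uniqP us) ss.
  move=> i _ /=; rewrite /B; case: ifP => // iS.
  by rewrite inE in iS; have := sZ i iS; rewrite inE => /eqP.
apply: (@le_trans _ _ (P (N `|` U))).
  apply: le_measure; rewrite ?inE //; exact: measurableU.
apply: le_trans (measureU2 _ _ _) _ => //.
rewrite [X in (X + _)%E](_ : _ = 0%E); last exact: PN0.
rewrite add0e; apply: (le_trans PU).
rewrite (eq_bigr _ (fun S _ => PF S)) sumEFin lee_fin big_enum /=.
rewrite (eq_bigl (fun S : {set 'I_u} => #|S| == k)); last by move=> S; rewrite inE.
rewrite /p; apply: le_trans (sum_bound _ _ _ _ (le_trans ler01 g1)) _.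
apply: final_bound => //.
Qed.
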